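(* Let $n,k$ be integers with $1\leq k\leq n-1$. Let $a\in\mathbb{Z}^n$ and $\alpha\in\mathbb{Z}$ be such that $ax\geq\alpha$ is a facet defining inequality of $Q(C_n^k)$ which is neither (a positive multiple of) a boolean facet nor (a positive multiple of) the rank constraint. Put $a^0=\min\{a_i:i\in\mathbb{Z}_n\}$ and $W=\{i\in\mathbb{Z}_n: a_i>a^0\}$, so that the inequality reads $\sum_{i\in W}a_ix_i+a^0\sum_{i\notin W}x_i\geq\alpha$. Then: 1. For every $i\in\mathbb{Z}_n$ there exist (a) a root $\tilde x$ with $i\in\tilde x$, (b) a root $\tilde x$ with $i\notin\tilde x$, and (c) a root $\tilde x$ with $|\tilde x\cap C^i|=2$. 2. Let $i\in W$ and let $\tilde x$ be a root with $i\in\tilde x$. (a) If there exists $j\neq i$ with $j\in\tilde x\cap C^{i-k+1}$, then $[i,j+k]_n\subseteq W$. (b) If there exists $j\neq i$ with $j\in \tilde x\cap C^i$, then $[j-k,i]_n\subseteq W$.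
   Context: $\mathbb{Z}_n=\{0,\dots,n-1\}$ with addition modulo $n$; $(a,b)_n$, $[a,b)_n$, $(a,b]_n$, $[a,b]_n$ denote the $\mathbb{Z}_n$-cyclic intervals of points between $a$ and $b$ (open/closed at the respective ends). For $i\in\mathbb{Z}_n$, $C^i=[i,i+k)_n$, and the circulant matrix $C_n^k$ is the $n\times n$ $0,1$ matrix whose $i$-th row is the incidence vector of $C^i$. A cover of $C_n^k$ is a vector $x\in\{0,1\}^n$ with $C_n^kx\geq\mathbf 1$; vectors in $\{0,1\}^n$ are identified with the subsets of $\mathbb{Z}_n$ they are the characteristic vectors of. $Q(C_n^k)$ is the convex hull of the covers of $C_n^k$. The boolean facets are $x_i\geq0$, $x_i\leq 1$ and $\sum_{j\in C^i}x_j\geq 1$ ($i\in\mathbb{Z}_n$); the rank constraint is $\sum_{i\in\mathbb{Z}_n}x_i\geq\lceil n/k\rceil$. A root of an inequality $ax\geq\alpha$ is a cover $\tilde x$ of $C_n^k$ with $a\tilde x=\alpha$. *)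

(* Defs.v *)
From HB Require Import structures.
From mathcomp Require Import all_boot all_order all_algebra.
Set Implicit Arguments. Unset Strict Implicit. Unset Printing Implicit Defensive.
Import Order.TTheory GRing.Theory Num.Theory.
Local Open Scope ring_scope.

(* Z_n is represented by 'I_n; points of Z_n given as integers are reduced mod n. *)

Definition cd (n : nat) (p q : int) : nat := `|((q - p) %% n%:Z)%Z|%N.

Definition Cset (n k : nat) (i : int) : {set 'I_n} :=
  [set j : 'I_n | (cd n i (nat_of_ord j) < k)%N].

Definition cint (n : nat) (a b : int) : {set 'I_n} :=
  [set j : 'I_n | (cd n a (nat_of_ord j) <= cd n a b)%N].

(* x (a subset of Z_n, i.e. a 0/1 vector) is a cover of C_n^k *)
Definition cover (n k : nat) (x : {set 'I_n}) : bool :=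
  [forall i : 'I_n, [exists j in Cset n k (nat_of_ord i), j \in x]].

Definition lhs (n : nat) (a : 'I_n -> int) (x : {set 'I_n}) : int :=
  \sum_(i in x) a i.

Definition isroot (n k : nat) (a : 'I_n -> int) (alpha : int) (x : {set 'I_n}) : bool :=
  cover k x && (lhs a x == alpha).

(* homogenized characteristic vector (chi_x, 1) of x, used to measure affine dimension *)
Definition hom (n : nat) (x : {set 'I_n}) : 'rV[rat]_(n + 1) :=
  row_mx (\row_(j < n) ((j \in x)%:R : rat)) (const_mx 1).

(* dim conv(covers) + 1 *)
Definition rank_Q (n k : nat) : nat :=
  \rank (\sum_(x : {set 'I_n} | cover k x) genmx (hom x))%MS.

(* dim conv(roots) + 1  (the face {x in Q : a x = alpha} is conv(roots) when valid) *)
Definition rank_face (n k : nat) (a : 'I_n -> int) (alpha : int) : nat :=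
  \rank (\sum_(x : {set 'I_n} | isroot k a alpha x) genmx (hom x))%MS.

Definition valid (n k : nat) (a : 'I_n -> int) (alpha : int) : Prop :=
  forall x : {set 'I_n}, cover k x -> alpha <= lhs a x.

Definition facet (n k : nat) (a : 'I_n -> int) (alpha : int) : Prop :=
  [/\ valid k a alpha, (exists x, isroot k a alpha x) &
      rank_face k a alpha = (rank_Q n k).-1].

Definition posmult (n : nat) (a : 'I_n -> int) (alpha : int)
  (b : 'I_n -> rat) (beta : rat) : Prop :=
  exists2 l : rat, 0 < l &
    (forall j, (a j)%:~R = l * b j) /\ alpha%:~R = l * beta.

Definition boolean_facet (n k : nat) (a : 'I_n -> int) (alpha : int) : Prop :=
  exists i : 'I_n,
    [\/ posmult a alpha (fun j => (j == i)%:R) 0,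
        posmult a alpha (fun j => - (j == i)%:R) (-1)
     |  posmult a alpha (fun j => (j \in Cset n k (nat_of_ord i))%:R) 1 ].

Definition rank_constraint (n k : nat) (a : 'I_n -> int) (alpha : int) : Prop :=
  posmult a alpha (fun _ => 1) ((n + k - 1) %/ k)%:R.  (* ceil(n/k) *)

(* a^0 = min_i a_i (for n > 0) *)
Definition amin (n : nat) (a : 'I_n -> int) : int :=
  let s := [seq a i | i <- enum 'I_n] in \big[Num.min/head 0 s]_(v <- s) v.

Definition Wset (n : nat) (a : 'I_n -> int) : {set 'I_n} :=
  [set i | amin a < a i].

(* Main.v *)
Require Import Defs.
From HB Require Import structures.
From mathcomp Require Import all_boot all_order all_algebra zify ring lra.
Import Order.TTheory GRing.Theory Num.Theory.
Set Implicit Arguments. Unset Strict Implicit. Unset Printing Implicit Defensive.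
Local Open Scope ring_scope.

Definition eqm (n : nat) (a b : int) := (n%:Z %| a - b)%Z.

Lemma eqm_refl n a : eqm n a a.
Proof. by rewrite /eqm subrr dvdz0. Qed.

Lemma eqm_sym n a b : eqm n a b -> eqm n b a.
Proof. by rewrite /eqm => h; rewrite -opprB rpredN. Qed.

Lemma eqm_comb n A B C D E F :
  eqm n C D -> eqm n E F -> A - B = (C - D) + (E - F) -> eqm n A B.
Proof. by rewrite /eqm => h1 h2 ->; apply: rpredD. Qed.

Lemma eqm_trans n a b c : eqm n a b -> eqm n b c -> eqm n a c.
Proof. move=> h1 h2; apply: (@eqm_comb n a c a b b c h1 h2); ring. Qed.

Lemma eqm_shift n A B C D : eqm n C D -> A - B = C - D -> eqm n A B.
Proof. move=> h e; apply: (@eqm_comb n A B C D 0 0 h (eqm_refl n 0)); rewrite e; ring. Qed.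

Lemma cdP n p q : (0 < n)%N -> (cd n p q < n)%N /\ eqm n q (p + (cd n p q)%:Z).
Proof.
move=> n0; have n0' : (0 < n%:Z) by rewrite ltz_nat.
have ge : (0 <= (q - p) %% n%:Z)%Z by apply: modz_ge0; rewrite -lt0n n0.
have E : ((cd n p q)%:Z = (q - p) %% n%:Z)%Z by rewrite /cd gez0_abs.
split.
  by rewrite -ltz_nat E ltz_pmod.
rewrite /eqm E.
have -> : q - (p + ((q - p) %% n%:Z)%Z) = ((q - p) %/ n%:Z)%Z * n%:Z.
  by rewrite opprD addrA {1}(intdiv.divz_eq (q - p) n%:Z); ring.
by apply: dvdz_mull; apply: dvdzz.
Qed.

Lemma cdE n p q d : (d < n)%N -> eqm n q (p + d%:Z) -> cd n p q = d.
Proof.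
move=> dn /dvdzP [z hz].
rewrite /cd.
have -> : q - p = z * n%:Z + d%:Z by rewrite -hz; ring.
by rewrite modzMDl modz_small // ltz_nat dn.
Qed.

Lemma ord_eqm n (i j : 'I_n) : eqm n i j -> i = j.
Proof.
move=> /dvdzP [z hz]; apply: val_inj => /=; apply/eqP; rewrite -eqz_nat.
have hi : (0 <= (i:int) < n%:Z) by rewrite ltz_nat ltn_ord.
have hj : (0 <= (j:int) < n%:Z) by rewrite ltz_nat ltn_ord.
rewrite -(modz_small hi) -(modz_small hj).
have -> : (i:int) = z * n%:Z + j by rewrite -hz; ring.
by rewrite modzMDl.
Qed.
Definition ecol n (b : 'I_n -> rat) (beta : rat) : 'cV[rat]_(n+1) :=
  col_mx (\col_j b j) (const_mx (- beta)).

Lemma hom_ecol n (x : {set 'I_n}) b beta :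
  Defs.hom x *m ecol b beta = (\sum_(j in x) b j - beta)%:M.
Proof.
rewrite /Defs.hom /ecol mul_row_col; apply/matrixP => i j.
rewrite !ord1 !mxE /= big_ord1 !mxE mul1r.
congr (_ + _).
rewrite [RHS]big_mkcond /=; apply: eq_bigr => l _; rewrite !mxE.
by case: (l \in x); rewrite ?mul1r ?mul0r.
Qed.

Lemma key n (S : pred {set 'I_n}) (f e : 'cV[rat]_(n+1)) :
  \rank (\sum_(x | S x) genmx (Defs.hom x))%MS = n ->
  (forall x, S x -> Defs.hom x *m f = 0) -> (forall x, S x -> Defs.hom x *m e = 0) ->
  e != 0 -> exists c : rat, f = c *: e.
Proof.
move=> hr Hf He ne.
have hR : (\sum_(x | S x) genmx (Defs.hom x) <= kermx (row_mx f e))%MS.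
  apply/sumsmx_subP => x Sx; rewrite genmxE; apply/sub_kermxP.
  by rewrite mul_mx_row (Hf x Sx) (He x Sx) row_mx0.
have := mxrankS hR; rewrite mxrank_ker hr => h1.
have r1 : (\rank (f^T + e^T)%MS <= 1)%N.
  rewrite addsmxE -tr_row_mx mxrank_tr.
  move: h1; set r := \rank _; move: (rank_leq_row (row_mx f e)); rewrite -/r.
  move: r => r; rewrite -[r]/(r : nat) => h2 h3; lia.
have re : \rank e^T = 1%N.
  apply/eqP; rewrite eqn_leq rank_leq_row lt0n mxrank_eq0.
  by apply: contra ne => /eqP h; rewrite -(trmxK e) h trmx0.
have eq1 : \rank (f^T + e^T)%MS = 1%N.
  have := mxrankS (addsmxSr f^T e^T); rewrite re => h.
  by apply/eqP; rewrite eqn_leq r1 h.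
have := mxrank_leqif_sup (addsmxSr f^T e^T).
rewrite re eq1 => [[_]]; rewrite eqxx.
move=> h; move: (esym h); rewrite addsmx_sub => /andP [/submxP [D hD] _].
exists (D 0 0).
by rewrite -(trmxK f) hD trmx_mul trmxK (mx11_scalar D^T) mxE mul_mx_scalar.
Qed.
Lemma hom_le n k (x : {set 'I_n}) : Defs.cover k x ->
  (Defs.hom x <= \sum_(y : {set 'I_n} | Defs.cover k y) genmx (Defs.hom y))%MS.
Proof. by move=> cx; apply: (sumsmx_sup x) => //; rewrite genmxE. Qed.

Lemma rankQ_full n k : Defs.cover k [set: 'I_n] ->
  (forall j, Defs.cover k ([set: 'I_n] :\ j)) -> rank_Q n k = (n + 1)%N.
Proof.
move=> cT cj; rewrite /rank_Q.
set R := (\sum_(y : {set 'I_n} | _) _)%MS.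
have dl : forall j : 'I_n, ('e_(lshift 1 j) : 'rV[rat]_(n+1))
    = Defs.hom [set: 'I_n] - Defs.hom ([set: 'I_n] :\ j).
  move=> j; apply/rowP => l; rewrite !mxE.
  case: (split_ordP l) => l' -> ; rewrite ?row_mxEl ?row_mxEr !mxE ?eq_lshift ?eq_rlshift /=.
    by rewrite !inE andbT; case: (l' == j); rewrite ?subr0 ?subrr.
  by rewrite subrr.
have Hl : forall j : 'I_n, (('e_(lshift 1 j) : 'rV[rat]_(n+1)) <= R)%MS.
  move=> j; rewrite dl; apply: addmx_sub; first exact: hom_le.
  by rewrite eqmx_opp; apply: hom_le.
have dr : ('e_(rshift n ord0) : 'rV[rat]_(n+1))
    = Defs.hom [set: 'I_n] - \sum_(j < n) 'e_(lshift 1 j).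
  apply/rowP => l; rewrite !mxE summxE.
  case: (split_ordP l) => l' -> ; rewrite ?row_mxEl ?row_mxEr !mxE ?eq_lshift ?eq_rlshift ?eq_lrshift /=.
    rewrite inE (bigD1 l') //= big1 ?mxE ?eqxx ?addr0 ?subrr //.
    by move=> j hj; rewrite !mxE eq_lshift eq_sym (negbTE hj).
  rewrite ord1 eqxx big1 ?subr0 // => j _.
  by rewrite !mxE eq_rlshift.
have Hr : (('e_(rshift n ord0) : 'rV[rat]_(n+1)) <= R)%MS.
  rewrite dr; apply: addmx_sub; first exact: hom_le.
  by rewrite eqmx_opp; apply: summx_sub => j _; apply: Hl.
have H1 : ((1%:M : 'M[rat]_(n+1)) <= R)%MS.
  apply/row_subP => i; rewrite row1.
  case: (split_ordP i) => i' ->; first exact: Hl.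
  by rewrite ord1.
apply/eqP; rewrite eqn_leq rank_leq_col.
by have := mxrankS H1; rewrite mxrank1.
Qed.

Lemma CsetP n k (i : int) (j : 'I_n) : (k <= n)%N ->
  reflect (exists d, (d < k)%N /\ eqm n j (i + d%:Z)) (j \in Cset n k i).
Proof.
move=> kn; have n0 : (0 < n)%N by apply: leq_ltn_trans (ltn_ord j).
rewrite inE; apply: (iffP idP).
  by move=> h; exists (cd n i j); split => //; case: (cdP i j n0).
by move=> [d [dk h]]; rewrite (cdE (leq_trans dk kn) h).
Qed.

Lemma cintP n a b (m : 'I_n) : m \in cint n a b ->
  exists s, (s <= cd n a b)%N /\ eqm n m (a + s%:Z).
Proof.
have n0 : (0 < n)%N by apply: leq_ltn_trans (ltn_ord m).
rewrite inE => h; exists (cd n a m); split => //; by case: (cdP a m n0).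
Qed.

Lemma reprP n (z : int) : (0 < n)%N -> exists w : 'I_n, eqm n w z.
Proof.
move=> n0; have [lt h] := cdP 0 z n0.
exists (Ordinal lt) => /=; apply: eqm_sym; rewrite add0r in h; exact: h.
Qed.

Lemma coverP n k (x : {set 'I_n}) :
  Defs.cover k x <-> forall l : 'I_n, exists2 w, w \in x & w \in Cset n k l.
Proof.
split.
  by move=> /forallP h l; have /existsP [w /andP [h1 h2]] := h l; exists w.
move=> h; apply/forallP => l; have [w h1 h2] := h l.
by apply/existsP; exists w; rewrite h1 h2.
Qed.

Lemma cover_sub n k (x y : {set 'I_n}) : Defs.cover k x -> x \subset y -> Defs.cover k y.
Proof.
move=> /coverP h sxy; apply/coverP => l; have [w h1 h2] := h l.
by exists w => //; apply: (subsetP sxy).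
Qed.

Lemma eqm_1 n (a : int) : (2 <= n)%N -> ~ eqm n a (a + 1).
Proof.
move=> n2; rewrite /eqm; have -> : a - (a + 1) = - 1 by ring.
rewrite rpredN dvdzE /= dvdn1 => /eqP hn.
by rewrite hn in n2.
Qed.

Lemma cover_setT n k : (0 < k)%N -> (k <= n)%N -> Defs.cover k [set: 'I_n].
Proof.
move=> k0 kn; apply/coverP => l; exists l; first by rewrite in_setT.
apply/(@CsetP _ _ _ _ kn); exists 0%N; split => //; rewrite addr0; exact: eqm_refl.
Qed.

Lemma cover_setTD n k j : (2 <= k)%N -> (k <= n)%N -> Defs.cover k ([set: 'I_n] :\ j).
Proof.
move=> k2 kn; have n2 : (2 <= n)%N by apply: leq_trans kn.
apply/coverP => l; case: (eqVneq l j) => [elj|nlj].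
  have [w hw] := @reprP n (l%:Z + 1) (ltnW n2).
  exists w.
    rewrite !inE andbT; apply/negP => /eqP ewj.
    by apply: (@eqm_1 n l n2); move: hw; rewrite ewj -elj.
  by apply/(@CsetP _ _ _ _ kn); exists 1%N; split.
exists l; first by rewrite !inE nlj.
apply/(@CsetP _ _ _ _ kn); exists 0%N; split; first by apply: leq_trans k2.
by rewrite addr0; exact: eqm_refl.
Qed.

Lemma lhs_U1 n (a : 'I_n -> int) (x : {set 'I_n}) m : m \notin x -> lhs a (m |: x) = a m + lhs a x.
Proof. by move=> h; rewrite /lhs big_setU1. Qed.

Lemma lhs_D1 n (a : 'I_n -> int) (x : {set 'I_n}) m : m \in x -> lhs a x = a m + lhs a (x :\ m).
Proof. by move=> h; rewrite /lhs (big_setD1 m). Qed.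

Lemma hom_neq0 n (x : {set 'I_n}) : Defs.hom x != 0.
Proof.
apply/eqP => h; have := congr1 (fun M : 'rV[rat]_(n+1) => M 0 (rshift n ord0)) h.
by rewrite /Defs.hom row_mxEr !mxE => /eqP; rewrite oner_eq0.
Qed.

Lemma facet_not_all n k (a : 'I_n -> int) (alpha : int) : facet k a alpha ->
  ~ (forall x : {set 'I_n}, Defs.cover k x -> isroot k a alpha x).
Proof.
move=> [V [x0 r0] rk] h.
have e : rank_face k a alpha = rank_Q n k.
  rewrite /rank_face /rank_Q; congr (\rank _); apply: eq_bigl => x.
  apply/idP/idP; first by case/andP.
  exact: h.
have c0 : Defs.cover k x0 by case/andP: r0.
have pos : (0 < rank_Q n k)%N.
  have := mxrankS (hom_le c0); rewrite /rank_Q; apply: leq_trans.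
  by rewrite lt0n mxrank_eq0 hom_neq0.
by move: rk; rewrite e; move: pos; case: (rank_Q n k) => [|r] //= _; lia.
Qed.

Lemma facet_k2 n k (a : 'I_n -> int) (alpha : int) : (1 <= k)%N -> (k <= n - 1)%N -> facet k a alpha -> (2 <= k)%N.
Proof.
move=> k1 kn F; case: (ltnP 1 k) => // k1'.
have ek : k = 1%N by apply/eqP; rewrite eqn_leq k1 k1'.
have kn' : (k <= n)%N by apply: leq_trans kn (leq_subr _ _).
have allT : forall y : {set 'I_n}, Defs.cover k y -> y = setT.
  move=> y /coverP cy; apply/setP => l; rewrite in_setT.
  have [w wy /(@CsetP _ _ _ _ kn') [d [dk h]]] := cy l.
  move: dk; rewrite ek ltnS leqn0 => /eqP d0; move: h; rewrite d0 addr0 => /ord_eqm ewl.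
  by rewrite -ewl.
case: F => V [x0 r0] rk; exfalso; apply: (@facet_not_all n k a alpha (And3 V (ex_intro _ x0 r0) rk)).
move=> y cy; have c0 : Defs.cover k x0 by case/andP: r0.
by rewrite (allT y cy) -(allT x0 c0).
Qed.

Lemma facet_prop n k (a : 'I_n -> int) (alpha : int) (b : 'I_n -> rat) (beta : rat) :
  (2 <= k)%N -> (k <= n)%N -> facet k a alpha ->
  (forall x, isroot k a alpha x -> \sum_(j in x) b j = beta) ->
  (exists j, b j != 0) ->
  exists c : rat, (forall j, (a j)%:~R = c * b j) /\ alpha%:~R = c * beta.
Proof.
move=> k2 kn F Hb [j0 bj0].
have rQ : rank_Q n k = (n+1)%N.
  apply: rankQ_full; first by apply: cover_setT => //; apply: leq_trans k2.
  by move=> j; apply: cover_setTD.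
have rF : rank_face k a alpha = n by case: F => _ _ ->; rewrite rQ addn1.
have H1 : forall x, isroot k a alpha x ->
    Defs.hom x *m ecol (fun j => (a j)%:~R) alpha%:~R = 0.
  move=> x rx; rewrite hom_ecol; case/andP: rx => _ /eqP <-.
  by rewrite /lhs rmorph_sum subrr raddf0.
have H2 : forall x, isroot k a alpha x -> Defs.hom x *m ecol b beta = 0.
  by move=> x rx; rewrite hom_ecol (Hb x rx) subrr raddf0.
have H3 : ecol b beta != 0.
  apply/eqP => h; have := congr1 (fun M : 'cV[rat]_(n+1) => M (lshift 1 j0) 0) h.
  by rewrite /ecol col_mxEu !mxE => h'; rewrite h' eqxx in bj0.
have [c hc] := @key n (isroot k a alpha) _ _ rF H1 H2 H3.
exists c; split.
  move=> j; have := congr1 (fun M : 'cV[rat]_(n+1) => M (lshift 1 j) 0) hc.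
  by rewrite /ecol scale_col_mx !col_mxEu !mxE.
have := congr1 (fun M : 'cV[rat]_(n+1) => M (rshift n ord0) 0) hc.
rewrite /ecol scale_col_mx !col_mxEd !mxE => h.
by rewrite -[LHS]opprK h; ring.
Qed.

Lemma eqm_comb3 n A B C1 D1 C2 D2 C3 D3 :
  eqm n C1 D1 -> eqm n C2 D2 -> eqm n C3 D3 ->
  A - B = (C1 - D1) + (C2 - D2) + (C3 - D3) -> eqm n A B.
Proof. by rewrite /eqm => h1 h2 h3 ->; apply: rpredD => //; apply: rpredD. Qed.

Lemma zero_contra n k (a : 'I_n -> int) (alpha : int) :
  facet k a alpha -> (forall j, a j = 0) -> alpha = 0 -> False.
Proof.
move=> F ha h0; apply: (facet_not_all F) => x cx.
by rewrite /isroot cx /lhs big1 // h0.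
Qed.

Lemma sum_pred1 n (x : {set 'I_n}) m :
  \sum_(j in x) ((j == m)%:R : rat) = (m \in x)%:R.
Proof.
rewrite big_mkcond /= (bigD1 m) //= eqxx big1 ?addr0; first by case: (m \in x).
by move=> j /negbTE ->; case: (j \in x).
Qed.

Lemma sum_card n (x C : {set 'I_n}) :
  \sum_(j in x) ((j \in C)%:R : rat) = (#|x :&: C|)%:R.
Proof.
have -> : (#|x :&: C|)%:R = \sum_(j in x :&: C) (1 : rat) by rewrite sumr_const.
rewrite big_mkcond [RHS]big_mkcond /=.
apply: eq_bigr => j _; rewrite inE; case: (j \in x) => //.
by case: (j \in C).
Qed.

Lemma amin_ge0 n (a : 'I_n -> int) : (forall i, 0 <= a i) -> 0 <= amin a.
Proof.
move=> ha; rewrite /amin big_seq; apply: (big_ind (fun v : int => 0 <= v)).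
- by case: (enum 'I_n) => [|h t] //=.
- by move=> u v hu hv; rewrite le_min hu hv.
- by move=> v /mapP [i _ ->].
Qed.

Lemma in_Cset_self n k (i : 'I_n) : (0 < k)%N -> i \in Cset n k i.
Proof.
move=> k0; rewrite inE (@cdE n i i 0) //; first exact: leq_ltn_trans (ltn_ord i).
by rewrite addr0; apply: eqm_refl.
Qed.

Lemma cd_inj n (i : int) (p q : 'I_n) : cd n i p = cd n i q -> p = q.
Proof.
have n0 : (0 < n)%N by apply: leq_ltn_trans (ltn_ord p).
move=> e; have [_ hp] := cdP i p n0; have [_ hq] := cdP i q n0.
apply: ord_eqm; apply: (eqm_trans hp); rewrite e; exact: eqm_sym.
Qed.

Lemma a_ge0 n k (a : 'I_n -> int) (alpha : int) :
  (2 <= k)%N -> (k <= n)%N -> facet k a alpha -> ~ boolean_facet k a alpha ->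
  forall m, 0 <= a m.
Proof.
move=> k2 kn F NB m; rewrite leNgt; apply/negP => am.
have [V _ _] := F.
have Hr : forall x, isroot k a alpha x -> m \in x.
  move=> x rx; apply/negPn/negP => mx; case/andP: rx => cx /eqP lx.
  have := V (m |: x) (cover_sub cx (subsetUr _ _)).
  rewrite lhs_U1 // lx; lia.
have Hs : forall x, isroot k a alpha x -> \sum_(j in x) ((j == m)%:R : rat) = 1.
  by move=> x rx; rewrite sum_pred1 (Hr x rx).
have Hn : exists j, ((j == m)%:R : rat) != 0 by exists m; rewrite eqxx oner_neq0.
have [c [hc ha]] := @facet_prop n k a alpha (fun j => (j == m)%:R) 1 k2 kn F Hs Hn.
apply: NB; exists m; apply: Or32; exists (-c).
  by rewrite oppr_gt0; move: (hc m); rewrite eqxx mulr1 => <-; rewrite ltrz0.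
by split; [move=> j; rewrite hc | rewrite ha]; ring.
Qed.

Lemma part1a n k (a : 'I_n -> int) (alpha : int) (i : 'I_n) :
  (2 <= k)%N -> (k <= n)%N -> facet k a alpha -> ~ boolean_facet k a alpha ->
  exists2 x, isroot k a alpha x & i \in x.
Proof.
move=> k2 kn F NB.
case: (boolP [exists x, isroot k a alpha x && (i \in x)]).
  by move=> /existsP [x /andP [h1 h2]]; exists x.
move=> /existsPn Hn.
have Hs : forall x, isroot k a alpha x -> \sum_(j in x) ((j == i)%:R : rat) = 0.
  move=> x rx; rewrite sum_pred1; have := Hn x; rewrite rx /=.
  by move=> /negbTE ->.
have Hb : exists j, ((j == i)%:R : rat) != 0 by exists i; rewrite eqxx oner_neq0.
have [c [hc ha]] := @facet_prop n k a alpha (fun j => (j == i)%:R) 0 k2 kn F Hs Hb.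
have ci : c = (a i)%:~R by rewrite hc eqxx mulr1.
have a0 : 0 <= c by rewrite ci ler0z; apply: (a_ge0 k2 kn F NB).
case: (eqVneq c 0) => [c0|cn0].
  exfalso; apply: (zero_contra F).
    by move=> j; apply/eqP; rewrite -(intr_eq0 rat) hc c0 mul0r.
  by apply/eqP; rewrite -(intr_eq0 rat) ha mulr0.
exfalso; apply: NB; exists i; apply: Or31; exists c.
  by rewrite lt_def cn0 a0.
by split => // j; rewrite hc.
Qed.

Lemma part1b n k (a : 'I_n -> int) (alpha : int) (i : 'I_n) :
  (2 <= k)%N -> (k <= n)%N -> facet k a alpha -> ~ boolean_facet k a alpha ->
  exists2 x, isroot k a alpha x & i \notin x.
Proof.
move=> k2 kn F NB.
case: (boolP [exists x, isroot k a alpha x && (i \notin x)]).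
  by move=> /existsP [x /andP [h1 h2]]; exists x.
move=> /existsPn Hn.
have Hs : forall x, isroot k a alpha x -> \sum_(j in x) ((j == i)%:R : rat) = 1.
  move=> x rx; rewrite sum_pred1; have := Hn x; rewrite rx /= negbK.
  by move=> ->.
have Hb : exists j, ((j == i)%:R : rat) != 0 by exists i; rewrite eqxx oner_neq0.
have [c [hc ha]] := @facet_prop n k a alpha (fun j => (j == i)%:R) 1 k2 kn F Hs Hb.
have ci : c = (a i)%:~R by rewrite hc eqxx mulr1.
have a0 : 0 <= c by rewrite ci ler0z; apply: (a_ge0 k2 kn F NB).
have aj : forall j, j != i -> a j = 0.
  by move=> j hj; apply/eqP; rewrite -(intr_eq0 rat) hc (negbTE hj) mulr0.
have [V _ _] := F.
have := V _ (cover_setTD i k2 kn).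
rewrite /lhs big1; last by move=> j; rewrite !inE andbT; apply: aj.
move=> al0.
have c0 : c = 0.
  by apply/eqP; rewrite eq_le a0 andbT -(mulr1 c) -ha lerz0.
exfalso; apply: (zero_contra F).
  by move=> j; apply/eqP; rewrite -(intr_eq0 rat) hc c0 mul0r.
by apply/eqP; rewrite -(intr_eq0 rat) ha c0 mul0r.
Qed.

Lemma cover_meet n k (x : {set 'I_n}) (i : 'I_n) :
  Defs.cover k x -> (0 < #|x :&: Cset n k i|)%N.
Proof.
move=> /coverP h; have [w wx wC] := h i.
by apply/card_gt0P; exists w; rewrite inE wx wC.
Qed.

Lemma part1c_ex n k (a : 'I_n -> int) (alpha : int) (i : 'I_n) :
  (2 <= k)%N -> (k <= n)%N -> facet k a alpha -> ~ boolean_facet k a alpha ->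
  exists2 x, isroot k a alpha x & (2 <= #|x :&: Cset n k i|)%N.
Proof.
move=> k2 kn F NB.
case: (boolP [exists x, isroot k a alpha x && (2 <= #|x :&: Cset n k i|)%N]).
  by move=> /existsP [x /andP [h1 h2]]; exists x.
move=> /existsPn Hn.
have Hs : forall x, isroot k a alpha x ->
    \sum_(j in x) ((j \in Cset n k i)%:R : rat) = 1.
  move=> x rx; rewrite sum_card; have := Hn x; rewrite rx /= -ltnNge ltnS.
  have := cover_meet i (proj1 (andP rx)).
  by case: #|_| => [|[|m]] //.
have Hb : exists j, ((j \in Cset n k i)%:R : rat) != 0.
  by exists i; rewrite in_Cset_self ?oner_neq0 //; apply: leq_trans k2.
have [c [hc ha]] := @facet_prop n k a alpha _ 1 k2 kn F Hs Hb.
have ci : c = (a i)%:~R by rewrite hc in_Cset_self ?mulr1 //; apply: leq_trans k2.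
have a0 : 0 <= c by rewrite ci ler0z; apply: (a_ge0 k2 kn F NB).
case: (eqVneq c 0) => [c0|cn0].
  exfalso; apply: (zero_contra F).
    by move=> j; apply/eqP; rewrite -(intr_eq0 rat) hc c0 mul0r.
  by apply/eqP; rewrite -(intr_eq0 rat) ha c0 mul0r.
exfalso; apply: NB; exists i; apply: Or33; exists c.
  by rewrite lt_def cn0 a0.
by split => // j; rewrite hc.
Qed.

Lemma descent n k (a : 'I_n -> int) (alpha : int) (i : 'I_n) (x : {set 'I_n}) :
  (2 <= k)%N -> (k <= n)%N -> facet k a alpha -> ~ boolean_facet k a alpha ->
  isroot k a alpha x -> (2 < #|x :&: Cset n k i|)%N ->
  exists2 y, isroot k a alpha y & #|y :&: Cset n k i| = #|x :&: Cset n k i|.-1.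
Proof.
move=> k2 kn F NB rx c3.
have n0 : (0 < n)%N by apply: leq_ltn_trans (ltn_ord i).
set C := Cset n k i; set X := x :&: C.
have [p0 p0X] : exists p0, p0 \in X by apply/card_gt0P; apply: leq_trans c3.
set o := fun p : 'I_n => cd n i p.
case: (@arg_minnP _ p0 (fun p => p \in X) o p0X) => p1 p1X p1min.
case: (@arg_maxnP _ p0 (fun p => p \in X) o p0X) => p3 p3X p3max.
have [p2 p2X] : exists p2, p2 \in X :\ p1 :\ p3.
  apply/card_gt0P.
  have h1 := cardsD1 p1 X; have h2 := cardsD1 p3 (X :\ p1).
  rewrite p1X in h1; move: h2 c3; rewrite -/X h1.
  case: (p3 \in X :\ p1); rewrite /=; lia.
move: p2X; rewrite !inE => /and3P [n23 n21 /andP [p2x p2C]].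
move: p1X p3X; rewrite !inE => /andP [p1x p1C] /andP [p3x p3C].
have l12 : (o p1 < o p2)%N.
  have hle : (o p1 <= o p2)%N by apply: p1min; rewrite !inE p2x p2C.
  rewrite ltn_neqAle hle andbT.
  by apply/eqP => /cd_inj e; rewrite e eqxx in n21.
have l23 : (o p2 < o p3)%N.
  have hle : (o p2 <= o p3)%N by apply: p3max; rewrite !inE p2x p2C.
  rewrite ltn_neqAle hle andbT.
  by apply/eqP => /cd_inj e; rewrite e eqxx in n23.
have d3k : (o p3 < k)%N by [].
have d2k : (o p2 < k)%N by [].
have [_ h1] := cdP i p1 n0; have [_ h2] := cdP i p2 n0; have [_ h3] := cdP i p3 n0.
rewrite -/(o p1) in h1; rewrite -/(o p2) in h2; rewrite -/(o p3) in h3.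
have cy : Defs.cover k (x :\ p2).
  case/andP: rx => /coverP cx _; apply/coverP => l.
  have [w wx wC] := cx l.
  case: (eqVneq w p2) => [ew|wn]; last by exists w => //; rewrite in_setD1 wn wx.
  move: wC; rewrite ew => /(@CsetP _ _ _ _ kn) [u [uk hu]].
  case: (leqP (o p2 - o p1) u) => hu2.
    exists p1; first by rewrite in_setD1 p1x eq_sym n21.
    apply/(@CsetP _ _ _ _ kn); exists (u - (o p2 - o p1))%N; split.
      by apply: leq_ltn_trans uk; apply: leq_subr.
    apply: (eqm_comb3 h1 (eqm_sym h2) hu); lia.
  exists p3; first by rewrite in_setD1 p3x eq_sym n23.
  apply/(@CsetP _ _ _ _ kn); exists (u + (o p3 - o p2))%N; split.
    by lia.
  apply: (eqm_comb3 h3 (eqm_sym h2) hu); lia.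
have [V _ _] := F.
have ly := V _ cy.
case/andP: rx => _ /eqP lx.
have ap2 := a_ge0 k2 kn F NB p2.
have lx' := lhs_D1 a p2x.
exists (x :\ p2).
  by rewrite /isroot cy /=; apply/eqP; lia.
have -> : (x :\ p2) :&: C = X :\ p2.
  by apply/setP => z; rewrite !inE; case: (z == p2); case: (z \in x).
have := cardsD1 p2 X; rewrite !inE p2x p2C /= => ->.
by [].
Qed.

Lemma part1c n k (a : 'I_n -> int) (alpha : int) (i : 'I_n) :
  (2 <= k)%N -> (k <= n)%N -> facet k a alpha -> ~ boolean_facet k a alpha ->
  exists2 x, isroot k a alpha x & #|x :&: Cset n k i| = 2%N.
Proof.
move=> k2 kn F NB.
have [x rx cx] := part1c_ex i k2 kn F NB.
have main : forall N x, isroot k a alpha x -> #|x :&: Cset n k i| = N -> (2 <= N)%N ->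
    exists2 y, isroot k a alpha y & #|y :&: Cset n k i| = 2%N.
  elim=> [|N IH] y ry eN hN; first by [].
  case: (ltnP 2 N.+1) => h.
    have h' : (2 < #|y :&: Cset n k i|)%N by rewrite eN.
    have [z rz ez] := descent k2 kn F NB ry h'.
    have e2 : #|z :&: Cset n k i| = N by rewrite ez eN.
    by apply: (IH z rz e2); lia.
  by exists y => //; rewrite eN; apply/eqP; rewrite eqn_leq h hN.
exact: main _ x rx erefl cx.
Qed.

Lemma arith1 (al ai L L' amn am : int) : al <= L -> al = ai + L' -> L = L' ->
  0 <= amn -> amn < ai -> amn < am.
Proof. move=> *; lia. Qed.

Lemma arith2 (al ai L L' amn am : int) : al <= am + L -> al = ai + L' -> L = L' ->
  amn < ai -> amn < am.
Proof. move=> *; lia. Qed.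

Lemma finish n k (a : 'I_n -> int) (alpha : int) (i m : 'I_n) (x : {set 'I_n}) :
  (forall q, 0 <= a q) -> valid k a alpha -> isroot k a alpha x -> i \in x ->
  i \in Wset a -> Defs.cover k (m |: (x :\ i)) -> m \in Wset a.
Proof.
move=> a0 V rx ix iW cy.
have am0 : (0 : int) <= amin a by apply: amin_ge0.
move: iW; rewrite !inE => iW.
case/andP: rx => _ /eqP lx.
have ly := V _ cy.
have lx' := lhs_D1 a ix.
case: (boolP (m \in x :\ i)) => hmx.
  move: ly; rewrite (setUidPr (_ : [set m] \subset x :\ i)); last by rewrite sub1set.
  move=> h; move: lx'; rewrite lx => e.
  exact: (@arith1 _ _ _ _ _ _ h e erefl am0 iW).
move: ly; rewrite lhs_U1 // => h; move: lx'; rewrite lx => e.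
exact: (@arith2 _ _ _ _ _ _ h e erefl iW).
Qed.

Lemma part2a n k (a : 'I_n -> int) (alpha : int) (i j : 'I_n) (x : {set 'I_n}) :
  (2 <= k)%N -> (k <= n)%N -> facet k a alpha -> ~ boolean_facet k a alpha ->
  i \in Wset a -> isroot k a alpha x -> i \in x ->
  j != i -> j \in x -> j \in Cset n k ((nat_of_ord i)%:Z - k%:Z + 1) ->
  cint n (nat_of_ord i) ((nat_of_ord j)%:Z + k%:Z) \subset Wset a.
Proof.
move=> k2 kn F NB iW rx ix ji jx /(@CsetP _ _ _ _ kn) [t [tk ht]].
have a0 := a_ge0 k2 kn F NB.
have [V _ _] := F.
have tk1 : (t.+1 < k)%N.
  case: (ltnP t.+1 k) => // h; exfalso.
  have : j = i.
    apply: ord_eqm; apply: (eqm_comb ht (eqm_refl n 0)); lia.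
  by move=> e; rewrite e eqxx in ji.
have ecd : cd n i (j%:Z + k%:Z) = t.+1.
  apply: cdE; first by lia.
  apply: (eqm_comb ht (eqm_refl n 0)); lia.
apply/subsetP => m /cintP [s [hs hm]]; rewrite ecd in hs.
case: (posnP s) => [s0|s0].
  have -> : m = i by apply: ord_eqm; move: hm; rewrite s0 addr0.
  by [].
apply: (finish a0 V rx ix iW).
have cx : Defs.cover k x by case/andP: rx.
move/coverP: cx => cx; apply/coverP => l.
have [w wx wC] := cx l.
case: (eqVneq w i) => [ew|wn]; last by exists w => //; rewrite !inE wn wx orbT.
move: wC; rewrite ew => /(@CsetP _ _ _ _ kn) [u [uk hu]].
case: (leqP k (u + t.+1)) => hut.
  exists j; first by rewrite !inE ji jx orbT.
  apply/(@CsetP _ _ _ _ kn); exists (u + t.+1 - k)%N; split; first by lia.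
  apply: (eqm_comb ht hu); lia.
exists m; first by rewrite !inE eqxx.
apply/(@CsetP _ _ _ _ kn); exists (u + s)%N; split; first by lia.
apply: (eqm_comb hm hu); lia.
Qed.

Lemma part2b n k (a : 'I_n -> int) (alpha : int) (i j : 'I_n) (x : {set 'I_n}) :
  (2 <= k)%N -> (k <= n)%N -> facet k a alpha -> ~ boolean_facet k a alpha ->
  i \in Wset a -> isroot k a alpha x -> i \in x ->
  j != i -> j \in x -> j \in Cset n k (nat_of_ord i) ->
  cint n ((nat_of_ord j)%:Z - k%:Z) (nat_of_ord i) \subset Wset a.
Proof.
move=> k2 kn F NB iW rx ix ji jx /(@CsetP _ _ _ _ kn) [t [tk ht]].
have a0 := a_ge0 k2 kn F NB.
have [V _ _] := F.
have t0 : (0 < t)%N.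
  case: (posnP t) => // h; exfalso.
  have : j = i.
    apply: ord_eqm; apply: (eqm_comb ht (eqm_refl n 0)); rewrite h; lia.
  by move=> e; rewrite e eqxx in ji.
have ecd : cd n (j%:Z - k%:Z) i = (k - t)%N.
  apply: cdE; first by lia.
  apply: (eqm_comb (eqm_sym ht) (eqm_refl n 0)); lia.
apply/subsetP => m /cintP [s [hs hm]]; rewrite ecd in hs.
case: (ltnP s (k - t)) => hst; last first.
  have -> : m = i.
    apply: ord_eqm; apply: (eqm_comb hm ht); lia.
  by [].
apply: (finish a0 V rx ix iW).
have cx : Defs.cover k x by case/andP: rx.
move/coverP: cx => cx; apply/coverP => l.
have [w wx wC] := cx l.
case: (eqVneq w i) => [ew|wn]; last by exists w => //; rewrite !inE wn wx orbT.
move: wC; rewrite ew => /(@CsetP _ _ _ _ kn) [u [uk hu]].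
case: (ltnP (u + t) k) => hut.
  exists j; first by rewrite !inE ji jx orbT.
  apply/(@CsetP _ _ _ _ kn); exists (u + t)%N; split => //.
  apply: (eqm_comb ht hu); lia.
exists m; first by rewrite !inE eqxx.
apply/(@CsetP _ _ _ _ kn); exists (u + t + s - k)%N; split; first by lia.
apply: (eqm_comb3 hm ht hu); lia.
Qed.

Theorem mainTheorem1 (n k : nat) (a : 'I_n -> int) (alpha : int) :
  (1 <= k)%N -> (k <= n - 1)%N ->
  facet k a alpha ->
  ~ boolean_facet k a alpha ->
  ~ rank_constraint k a alpha ->
  (forall i : 'I_n,
     [/\ exists2 x, isroot k a alpha x & i \in x,
         exists2 x, isroot k a alpha x & i \notin x
       & exists2 x, isroot k a alpha x & #|x :&: Cset n k (nat_of_ord i)| = 2%N])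
  /\
  (forall (i : 'I_n) (x : {set 'I_n}),
     i \in Wset a -> isroot k a alpha x -> i \in x ->
     (forall j : 'I_n, j != i -> j \in x ->
        j \in Cset n k ((nat_of_ord i)%:Z - k%:Z + 1) ->
        cint n (nat_of_ord i) ((nat_of_ord j)%:Z + k%:Z) \subset Wset a)
     /\
     (forall j : 'I_n, j != i -> j \in x ->
        j \in Cset n k (nat_of_ord i) ->
        cint n ((nat_of_ord j)%:Z - k%:Z) (nat_of_ord i) \subset Wset a)).
Proof.
move=> k1 kn1 F NB _.
have k2 := facet_k2 k1 kn1 F.
have kn : (k <= n)%N by apply: leq_trans kn1 (leq_subr _ _).
split.
  move=> i; split.
  - exact: part1a.
  - exact: part1b.
  - exact: part1c.
move=> i x iW rx ix; split.
  by move=> j ji jx jC; apply: (part2a k2 kn F NB iW rx ix ji jx jC).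
by move=> j ji jx jC; apply: (part2b k2 kn F NB iW rx ix ji jx jC).
Qed.
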